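(* If $\mathscr{S}$ is a relaxed scenario, then $G_{=}(\mathscr{S})$ does not contain an induced path on six vertices.
   Context: All trees are planted phylogenetic trees: a tree $T$ has a distinguished vertex $0_T$ of degree $1$ whose unique neighbor $\rho_T$ is the root, and every vertex other than $0_T$ and the leaves $L(T)$ has at least two children. For $x,y\in V(T)$ write $y\preceq_T x$ if $x$ lies on the path from $0_T$ to $y$; edges are written $uv$ with $v\prec_T u$. $\mathrm{lca}_T$ denotes the last common ancestor. A time map for $T$ is $\tau_T\colon V(T)\to\mathbb{R}$ with $\tau_T(x)<\tau_T(y)$ whenever $x\prec_T y$. A relaxed scenario $\mathscr{S}=(T,S,\sigma,\mu,\tau_T,\tau_S)$ consists of a gene tree $T$ with time map $\tau_T$, a species tree $S$ with time map $\tau_S$, a map $\sigma\colon L(T)\to M$ with $M\subseteq L(S)$, and a map $\mu\colon V(T)\to V(S)\cup E(S)$ such that (S0) $\mu(x)=0_S$ iff $x=0_T$; (S1) $\mu(x)\in L(S)$ iff $x\in L(T)$, in which case $\mu(x)=\sigma(x)$; (S2) if $\mu(x)\in V(S)$ then $\tau_S(\mu(x))=\tau_T(x)$; (S3) if $\mu(x)=uv\in E(S)$ then $\tau_S(v)<\tau_T(x)<\tau_S(u)$. The EDT graph $G_{=}(\mathscr{S})$ has vertex set $L(T)$ and an edge $xy$ ($x\ne y$) iff $\tau_T(\mathrm{lca}_T(x,y))=\tau_S(\mathrm{lca}_S(\sigma(x),\sigma(y)))$. *)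

(* Defs.v *)
From Stdlib Require Import Reals.
From mathcomp Require Import all_boot.

Set Implicit Arguments.
Unset Strict Implicit.
Unset Printing Implicit Defensive.

(* A finite rooted tree on a finType V is given by a parent map [par]
   and the planting vertex [z] (= 0_T) with [par z = z]; every vertex
   reaches [z] by iterating [par]. *)

Section Trees.
Variables (V : finType) (par : V -> V) (z : V).

Definition child (v u : V) : bool := (par v == u) && (v != z).

Definition is_edge (u v : V) : bool := child v u.

Definition leaf (v : V) : bool := (v != z) && [forall w, ~~ child w v].

(* y <=_T x : x lies on the path from 0_T to y *)
Definition anc (x y : V) : Prop := exists k, iter k par y = x.

Definition sanc (x y : V) : Prop := anc x y /\ x <> y.

Definition is_lca (x y a : V) : Prop :=
  anc a x /\ anc a y /\ (forall b, anc b x -> anc b y -> anc b a).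

Definition planted_phylo_tree : Prop :=
  par z = z /\
  (forall v, exists k, iter k par v = z) /\
  #|[set w | child w z]| = 1 /\
  (forall v, v != z -> ~~ leaf v -> 2 <= #|[set w | child w v]|).

Definition time_map (tau : V -> R) : Prop :=
  forall x y, sanc y x -> Rlt (tau x) (tau y).

End Trees.

(* Targets of the reconciliation map mu : V(T) -> V(S) \cup E(S). *)
Inductive vert_or_edge (VS : Type) : Type :=
  | MVert of VS
  | MEdge of VS & VS.  (* MEdge u v stands for the edge uv, v child of u *)

Arguments MVert {VS} _.
Arguments MEdge {VS} _ _.

Definition relaxed_scenario (VT VS : finType)
  (parT : VT -> VT) (zT : VT) (parS : VS -> VS) (zS : VS)
  (sigma : VT -> VS) (mu : VT -> vert_or_edge VS)
  (tauT : VT -> R) (tauS : VS -> R) : Prop :=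
  planted_phylo_tree parT zT /\ planted_phylo_tree parS zS /\
  time_map parT tauT /\ time_map parS tauS /\
  (forall x, leaf parT zT x -> leaf parS zS (sigma x)) /\
  (forall x u v, mu x = MEdge u v -> is_edge parS zS u v) /\
  (forall x, mu x = MVert zS <-> x = zT) /\
  (forall x, (exists v, mu x = MVert v /\ leaf parS zS v) <-> leaf parT zT x) /\
  (forall x, leaf parT zT x -> mu x = MVert (sigma x)) /\
  (forall x v, mu x = MVert v -> tauS v = tauT x) /\
  (forall x u v, mu x = MEdge u v -> Rlt (tauS v) (tauT x) /\ Rlt (tauT x) (tauS u)).

Definition edt_edge (VT VS : finType)
  (parT : VT -> VT) (parS : VS -> VS) (sigma : VT -> VS)
  (tauT : VT -> R) (tauS : VS -> R) (x y : VT) : Prop :=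
  x <> y /\
  exists a b, is_lca parT x y a /\ is_lca parS (sigma x) (sigma y) b /\
              tauT a = tauS b.

Definition has_induced_P6 (VT : finType) (isv : VT -> bool)
  (adj : VT -> VT -> Prop) : Prop :=
  exists a : 'I_6 -> VT,
    injective a /\ (forall i, isv (a i)) /\
    (forall i j : 'I_6, adj (a i) (a j) <-> (i.+1 == j :> nat) || (j.+1 == i :> nat)).

(* Main.v *)
Require Import Defs.
From Stdlib Require Import Reals Lra Classical ClassicalEpsilon.
From mathcomp Require Import all_boot.

Set Implicit Arguments.
Unset Strict Implicit.
Unset Printing Implicit Defensive.

Section Tree.
Variables (V : finType) (par : V -> V) (z : V) (tau : V -> R).
Hypothesis Hreach : forall v, exists k, iter k par v = z.
Hypothesis Htime : time_map par tau.

Lemma anc_refl x : anc par x x.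
Proof. by exists 0. Qed.

Lemma anc_trans a b c : anc par a b -> anc par b c -> anc par a c.
Proof.
move=> [m Hm] [k Hk]; exists (m + k); by rewrite iterD Hk Hm.
Qed.

Lemma anc_idx_total x k m : (k <= m)%N -> anc par (iter m par x) (iter k par x).
Proof. move=> H; exists (m - k); by rewrite -iterD subnK. Qed.

Lemma anc_total a b x : anc par a x -> anc par b x -> anc par a b \/ anc par b a.
Proof.
move=> [k <-] [m <-]; case: (leqP k m) => H.
- right; exact: anc_idx_total.
- left; apply: anc_idx_total; exact: ltnW.
Qed.

Lemma tau_le a b : anc par a b -> Rle (tau b) (tau a).
Proof.
move=> H; case: (eqVneq a b) => [->|ne]; first lra.
apply: Rlt_le; apply: Htime; split => //; by move=> E; rewrite E eqxx in ne.
Qed.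

Lemma anc_antisym a b : anc par a b -> anc par b a -> a = b.
Proof.
move=> H1 H2; apply: NNPP => ne.
have h1 : Rlt (tau b) (tau a) by apply: Htime; split.
have h2 := tau_le H2; lra.
Qed.

Lemma lca_exists x y : exists a, is_lca par x y a.
Proof.
have [k Hk] := Hreach x.
have [m Hm] := Hreach y.
have main : forall n j, (j <= n)%N -> anc par (iter j par x) y -> exists a, is_lca par x y a.
  elim=> [|n IH] j Hj c2.
  - rewrite leqn0 in Hj; move/eqP: Hj c2 => -> c2; exists (iter 0 par x).
    split; first exact: anc_refl. split => // b Hb _; exact: Hb.
  - case: (classic (forall b, anc par b x -> anc par b y -> anc par b (iter j par x))) => Hall.
    + exists (iter j par x); split; [by exists j | split => //].
    + have [b Hb] := not_all_ex_not _ _ Hall.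
      have [Hbx [Hby Hn]] : anc par b x /\ anc par b y /\ ~ anc par b (iter j par x).
        by apply: NNPP => C; apply: Hb => h1 h2; apply: NNPP => h3; apply: C.
      move: (Hbx) => [i Hi]; case: (leqP j i) => Hij.
      * by exfalso; apply: Hn; rewrite -Hi; apply: anc_idx_total.
      * have Hin : (i <= n)%N by rewrite -ltnS; apply: leq_trans Hij Hj.
        by apply: (IH i Hin); rewrite Hi.
apply: (main k k (leqnn k)); rewrite Hk; by exists m.
Qed.

Lemma lca_unique x y a b : is_lca par x y a -> is_lca par x y b -> a = b.
Proof.
move=> [a1 [a2 a3]] [b1 [b2 b3]]; apply: anc_antisym; [apply: b3 | apply: a3] => //.
Qed.

Definition lcaf x y : V := epsilon (inhabits x) (fun a => is_lca par x y a).

Lemma lcaf_spec x y : is_lca par x y (lcaf x y).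
Proof. exact: (epsilon_spec (inhabits x) _ (lca_exists x y)). Qed.

Definition dist x y := tau (lcaf x y).

Lemma dist_sym x y : dist x y = dist y x.
Proof.
rewrite /dist (@lca_unique x y (lcaf x y) (lcaf y x)) //; first exact: lcaf_spec.
have [h1 [h2 h3]] := lcaf_spec y x; split => //; split => // b u v; exact: h3.
Qed.

Lemma dist_ultra x y w : Rle (dist x w) (dist x y) \/ Rle (dist x w) (dist y w).
Proof.
have [l1x [l1y l1m]] := lcaf_spec x y.
have [l2y [l2w l2m]] := lcaf_spec y w.
have [l3x [l3w l3m]] := lcaf_spec x w.
rewrite /dist.
case: (anc_total l1y l2y) => H.
- left; apply: tau_le; apply: l3m => //; exact: anc_trans H l2w.
- right; apply: tau_le; apply: l3m => //; exact: anc_trans H l1x.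
Qed.

Lemma dist_edge x y a : is_lca par x y a -> a = lcaf x y.
Proof. move=> H; apply: lca_unique H (lcaf_spec x y). Qed.

End Tree.

Local Open Scope R_scope.

Section Comb.
Variable T : Type.

Definition ultra (D : T -> T -> R) :=
  (forall x y, D x y = D y x) /\ (forall x y w, D x w <= D x y \/ D x w <= D y w).

Lemma ltT D e x y w : ultra D -> D x y < e -> D y w < e -> D x w < e.
Proof. move=> [_ U] h1 h2; case: (U x y w); lra. Qed.

Lemma leT D e x y w : ultra D -> D x y <= e -> D y w <= e -> D x w <= e.
Proof. move=> [_ U] h1 h2; case: (U x y w); lra. Qed.

Lemma step1 D1 D2 x y w : ultra D1 -> ultra D2 ->
  D1 x y = D2 x y -> D1 y w = D2 y w -> D1 x w <> D2 x w -> D1 x y = D1 y w.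
Proof.
move=> [S1 U1] [S2 U2] e1 e2 ne.
have s1 := S1 y x; have s2 := S1 w y; have s3 := S2 y x; have s4 := S2 w y.
case: (U1 x y w); case: (U1 y x w); case: (U1 x w y);
case: (U2 x y w); case: (U2 y x w); case: (U2 x w y); lra.
Qed.

Ltac sy := first [assumption | match goal with S : forall x y, _ = _ |- _ => rewrite S; assumption end].

Lemma core (A B : T -> T -> R) e p0 p1 p2 p3 p4 p5 :
  ultra A -> ultra B ->
  A p0 p1 = e -> A p1 p2 = e -> A p2 p3 = e -> A p3 p4 = e -> A p4 p5 = e ->
  B p0 p1 = e -> B p1 p2 = e -> B p2 p3 = e -> B p3 p4 = e -> B p4 p5 = e ->
  (A p0 p3 < e \/ B p0 p3 < e) -> (A p1 p3 < e \/ B p1 p3 < e) ->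
  (A p1 p4 < e \/ B p1 p4 < e) -> (A p2 p4 < e \/ B p2 p4 < e) ->
  (A p1 p5 < e \/ B p1 p5 < e) -> (A p0 p5 < e \/ B p0 p5 < e) ->
  (A p2 p5 < e \/ B p2 p5 < e) ->
  A p0 p2 < e -> False.
Proof.
move=> uA uB a01 a12 a23 a34 a45 b01 b12 b23 b34 b45 H03 H13 H14 H24 H15 H05 H25 a02.
have [SA _] := uA; have [SB _] := uB.
have b03 : B p0 p3 < e.
  case: H03 => // h; exfalso.
  have := @ltT A e p2 p0 p3 uA ltac:(sy) ltac:(sy); lra.
have a13 : A p1 p3 < e.
  case: H13 => // h; exfalso.
  have := @ltT B e p0 p3 p1 uB ltac:(sy) ltac:(sy); lra.
have b14 : B p1 p4 < e.
  case: H14 => // h; exfalso.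
  have := @ltT A e p3 p1 p4 uA ltac:(sy) ltac:(sy); lra.
have a24 : A p2 p4 < e.
  case: H24 => // h; exfalso.
  have := @ltT B e p1 p4 p2 uB ltac:(sy) ltac:(sy); lra.
have a15 : A p1 p5 < e.
  case: H15 => // h; exfalso.
  have := @ltT B e p4 p1 p5 uB ltac:(sy) ltac:(sy); lra.
have b05 : B p0 p5 < e.
  case: H05 => // h; exfalso.
  have := @ltT A e p0 p5 p1 uA ltac:(sy) ltac:(sy); lra.
case: H25 => h.
- have := @ltT A e p4 p2 p5 uA ltac:(sy) ltac:(sy); lra.
- have b02 := @ltT B e p0 p5 p2 uB ltac:(sy) ltac:(sy).
  have := @ltT B e p2 p0 p3 uB ltac:(sy) ltac:(sy); lra.
Qed.

End Comb.

Lemma lt_or (a b e : R) : a <= e -> b <= e -> a <> b -> a < e \/ b < e.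
Proof. move=> h1 h2 h3; case: (Rlt_le_dec a e) => h; [left=>//|right; lra]. Qed.

Lemma sw (P Q : Prop) : P \/ Q -> Q \/ P.
Proof. by case; [right|left]. Qed.

Theorem lemma22 (VT VS : finType)
  (parT : VT -> VT) (zT : VT) (parS : VS -> VS) (zS : VS)
  (sigma : VT -> VS) (mu : VT -> vert_or_edge VS)
  (tauT : VT -> R) (tauS : VS -> R) :
  relaxed_scenario parT zT parS zS sigma mu tauT tauS ->
  ~ has_induced_P6 (leaf parT zT) (edt_edge parT parS sigma tauT tauS).
Proof.
move=> [[_ [rT _]] [[_ [rS _]] [tT [tS _]]]] [a [inj [_ Hadj]]].
pose D1 x y := dist parT tauT x y.
pose D2 x y := dist parS tauS (sigma x) (sigma y).
have u1 : ultra D1.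
  split=> *; [exact: dist_sym | exact: dist_ultra].
have u2 : ultra D2.
  split=> *; [exact: dist_sym | exact: dist_ultra].
have edge1 : forall x y, edt_edge parT parS sigma tauT tauS x y -> D1 x y = D2 x y.
  move=> x y [_ [l [m [Hl [Hm E]]]]].
  by rewrite /D1 /D2 /dist -(dist_edge rT tT Hl) -(dist_edge rS tS Hm).
have edge2 : forall x y, x <> y -> D1 x y = D2 x y -> edt_edge parT parS sigma tauT tauS x y.
  move=> x y ne E; split=> //; exists (lcaf parT x y), (lcaf parS (sigma x) (sigma y)).
  split; first exact: lcaf_spec. split; first exact: lcaf_spec. exact: E.
pose o0 := @Ordinal 6 0 isT. pose o1 := @Ordinal 6 1 isT. pose o2 := @Ordinal 6 2 isT.
pose o3 := @Ordinal 6 3 isT. pose o4 := @Ordinal 6 4 isT. pose o5 := @Ordinal 6 5 isT.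
have ed : forall i j : 'I_6, ((i.+1 == j :> nat) || (j.+1 == i :> nat)) -> D1 (a i) (a j) = D2 (a i) (a j).
  move=> i j h; apply: edge1; exact: (proj2 (Hadj i j) h).
have ne : forall i j : 'I_6, ((i.+1 == j :> nat) || (j.+1 == i :> nat)) = false -> (i != j) ->
    D1 (a i) (a j) <> D2 (a i) (a j).
  move=> i j h nij E.
  have : edt_edge parT parS sigma tauT tauS (a i) (a j).
    apply: edge2 => // aE; move/negP: nij; apply; apply/eqP; exact: inj.
  by move/(Hadj i j); rewrite h.
have e01 := ed o0 o1 isT. have e12 := ed o1 o2 isT. have e23 := ed o2 o3 isT.
have e34 := ed o3 o4 isT. have e45 := ed o4 o5 isT.
have n02 := ne o0 o2 erefl isT. have n03 := ne o0 o3 erefl isT.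
have n13 := ne o1 o3 erefl isT. have n14 := ne o1 o4 erefl isT.
have n24 := ne o2 o4 erefl isT. have n15 := ne o1 o5 erefl isT.
have n05 := ne o0 o5 erefl isT. have n25 := ne o2 o5 erefl isT.
have n35 := ne o3 o5 erefl isT.
have s1 := step1 u1 u2 e01 e12 n02.
have s2 := step1 u1 u2 e12 e23 n13.
have s3 := step1 u1 u2 e23 e34 n24.
have s4 := step1 u1 u2 e34 e45 n35.
set p0 := a o0 in e01 n02 n03 n05 s1 *.
set p1 := a o1 in e01 e12 n13 n14 n15 s1 s2 *.
set p2 := a o2 in e12 e23 n02 n24 n25 s1 s2 s3 *.
set p3 := a o3 in e23 e34 n03 n13 n35 s2 s3 s4 *.
set p4 := a o4 in e34 e45 n14 n24 s3 s4 *.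
set p5 := a o5 in e45 n15 n05 n25 n35 s4 *.
set e := D1 p0 p1.
have a01 : D1 p0 p1 = e by [].
have a12 : D1 p1 p2 = e by rewrite -s1.
have a23 : D1 p2 p3 = e by rewrite -s2 -s1.
have a34 : D1 p3 p4 = e by rewrite -s3 -s2 -s1.
have a45 : D1 p4 p5 = e by rewrite -s4 -s3 -s2 -s1.
have b01 : D2 p0 p1 = e by rewrite -e01.
have b12 : D2 p1 p2 = e by rewrite -e12.
have b23 : D2 p2 p3 = e by rewrite -e23.
have b34 : D2 p3 p4 = e by rewrite -e34.
have b45 : D2 p4 p5 = e by rewrite -e45.
have L1 : forall (D : VT -> VT -> R) (x y w : VT), ultra D -> D x y = e -> D y w = e -> D x w <= e.
  move=> D x y w u h1 h2; have := @leT VT D e x y w u; lra.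
have L2 : forall (D : VT -> VT -> R) (x y w : VT), ultra D -> D x y <= e -> D y w = e -> D x w <= e.
  move=> D x y w u h1 h2; have := @leT VT D e x y w u; lra.
have c02 := L1 _ _ _ _ u1 a01 a12. have d02 := L1 _ _ _ _ u2 b01 b12.
have c13 := L1 _ _ _ _ u1 a12 a23. have d13 := L1 _ _ _ _ u2 b12 b23.
have c24 := L1 _ _ _ _ u1 a23 a34. have d24 := L1 _ _ _ _ u2 b23 b34.
have c03 := L2 _ _ _ _ u1 c02 a23. have d03 := L2 _ _ _ _ u2 d02 b23.
have c14 := L2 _ _ _ _ u1 c13 a34. have d14 := L2 _ _ _ _ u2 d13 b34.
have c25 := L2 _ _ _ _ u1 c24 a45. have d25 := L2 _ _ _ _ u2 d24 b45.
have c15 := L2 _ _ _ _ u1 c14 a45. have d15 := L2 _ _ _ _ u2 d14 b45.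
have c05 : D1 p0 p5 <= e by have := @leT VT D1 e p0 p2 p5 u1; lra.
have d05 : D2 p0 p5 <= e by have := @leT VT D2 e p0 p2 p5 u2; lra.
have H02 := lt_or c02 d02 n02. have H03 := lt_or c03 d03 n03.
have H13 := lt_or c13 d13 n13. have H14 := lt_or c14 d14 n14.
have H24 := lt_or c24 d24 n24. have H15 := lt_or c15 d15 n15.
have H05 := lt_or c05 d05 n05. have H25 := lt_or c25 d25 n25.
case: H02 => h.
- exact: (core u1 u2 a01 a12 a23 a34 a45 b01 b12 b23 b34 b45 H03 H13 H14 H24 H15 H05 H25 h).
- exact: (core u2 u1 b01 b12 b23 b34 b45 a01 a12 a23 a34 a45 (sw H03) (sw H13) (sw H14) (sw H24) (sw H15) (sw H05) (sw H25) h).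
Qed.
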